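(* Let $d$ be a prime and let $c_0,\dots,c_7\in\mathbb{Z}_d$. The $d$-state first degree cellular automaton with parameters $\langle c_0,\dots,c_7\rangle$ is reversible for every number of cells $n\in\mathbb{N}$ under the null boundary condition if and only if $c_0=c_1=c_2=c_3=0$, at least one of $c_4=0$ or $c_6=0$ holds, and $\gcd(c_5,d)=1$ (i.e. $c_5\neq 0$); $c_7$ may be arbitrary.
   Context: Fix an integer $d\ge 2$ and the state set $S=\mathbb{Z}_d=\{0,1,\dots,d-1\}$. A first degree cellular automaton (FDCA) with parameters $\langle c_0,\dots,c_7\rangle$, $c_i\in\mathbb{Z}_d$, is the one-dimensional 3-neighborhood cellular automaton whose local rule $R:S^3\to S$ is $R(x,y,z)=c_0xyz+c_1xy+c_2xz+c_3yz+c_4x+c_5y+c_6z+c_7 \pmod d$. For $n\in\mathbb{N}$, $n\ge1$, the $n$-cell automaton under the null boundary condition acts on configurations $x=(x_0,\dots,x_{n-1})\in S^n$ by the global map $G_n:S^n\to S^n$, $G_n(x)_i=R(x_{i-1},x_i,x_{i+1})$ for $0\le i\le n-1$, with the convention $x_{-1}=x_n=0$. The automaton is reversible for a given $n$ if $G_n$ is a bijection. *)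

(* Defs.v *)
From HB Require Import structures.
From mathcomp Require Import all_boot all_order all_algebra.
Set Implicit Arguments. Unset Strict Implicit. Unset Printing Implicit Defensive.
Import GRing.Theory.
Local Open Scope ring_scope.

(* States: Z_d (for d >= 2, 'Z_d is exactly Z/dZ). *)

Definition fdca_rule (d : nat) (c0 c1 c2 c3 c4 c5 c6 c7 : 'Z_d)
  (x y z : 'Z_d) : 'Z_d :=
  c0 * x * y * z + c1 * x * y + c2 * x * z + c3 * y * z
  + c4 * x + c5 * y + c6 * z + c7.

Definition config (d n : nat) := {ffun 'I_n -> 'Z_d}.

Definition cell (d n : nat) (x : config d n) (i : nat) : 'Z_d :=
  match insub i with Some j => x j | None => 0 end.

Definition fdca_global (d n : nat) (c0 c1 c2 c3 c4 c5 c6 c7 : 'Z_d)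
  (x : config d n) : config d n :=
  [ffun i : 'I_n =>
     fdca_rule c0 c1 c2 c3 c4 c5 c6 c7
       (if nat_of_ord i is k.+1 then cell x k else 0)
       (x i)
       (cell x (nat_of_ord i).+1)].

Definition fdca_reversible (d n : nat) (c0 c1 c2 c3 c4 c5 c6 c7 : 'Z_d) : Prop :=
  bijective (@fdca_global d n c0 c1 c2 c3 c4 c5 c6 c7).

(* Main.v *)
Require Import Defs.
From mathcomp Require Import all_boot all_order all_algebra.
From mathcomp Require Import ring zify.
Set Implicit Arguments. Unset Strict Implicit. Unset Printing Implicit Defensive.
Import GRing.Theory.
Local Open Scope ring_scope.

Section Core.
Variable d : nat.
Hypothesis hd : prime d.
Variables c0 c1 c2 c3 c4 c5 c6 c7 : 'Z_d.

Lemma unitF (x : 'Z_d) : x != 0 -> x \is a GRing.unit.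
Proof.
move=> nz; have d1 : (1 < d)%N by exact: prime_gt1.
rewrite -[x]natr_Zp unitZpE // prime_coprime // gtnNdvd //.
  by rewrite lt0n; apply: contra nz => /eqP h; apply/eqP/val_inj.
have := ltn_ord x; by rewrite [X in (_ < X)%N -> _]Zp_cast.
Qed.

Definition mkc n (f : nat -> 'Z_d) : config d n := [ffun i : 'I_n => f i].

Lemma cellmk n f k : cell (mkc n f) k = if (k < n)%N then f k else 0.
Proof.
rewrite /cell; case: insubP => [j jlt <- | /negbTE ->]; last by [].
by rewrite ffunE /= (valP j).
Qed.

Definition R := fdca_rule c0 c1 c2 c3 c4 c5 c6 c7.
Definition nb (f : nat -> 'Z_d) i := if i is k.+1 then f k else 0.
Definition nx n (f : nat -> 'Z_d) i := if (i.+1 < n)%N then f i.+1 else 0.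

Lemma Gmk n f (i : 'I_n) :
  fdca_global c0 c1 c2 c3 c4 c5 c6 c7 (mkc n f) i = R (nb f i) (f i) (nx n f i).
Proof.
rewrite ffunE cellmk ffunE /R /nb /nx; case: i => [[|k] hk] //=.
by rewrite cellmk (ltnW hk).
Qed.

Lemma notrev n f g : (exists2 i, (i < n)%N & f i != g i) ->
  (forall i, (i < n)%N -> R (nb f i) (f i) (nx n f i) = R (nb g i) (g i) (nx n g i)) ->
  ~ fdca_reversible n c0 c1 c2 c3 c4 c5 c6 c7.
Proof.
move=> [i hi ne] H [h hK _].
have E : mkc n f = mkc n g.
  apply: (can_inj hK); apply/ffunP => j; rewrite !Gmk; exact: H.
move/ffunP: E => /(_ (Ordinal hi)); rewrite !ffunE /= => e.
by rewrite e eqxx in ne.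
Qed.

Lemma one_neq0 : (1 : 'Z_d) != 0. Proof. exact: oner_neq0. Qed.
Lemma zero_neq1 : (0 : 'Z_d) != 1. Proof. by rewrite eq_sym oner_neq0. Qed.

Lemma c5_nz : fdca_reversible 1 c0 c1 c2 c3 c4 c5 c6 c7 -> c5 != 0.
Proof.
move=> rv; apply/negP => /eqP h5.
apply: (@notrev 1 (fun _ => 0) (fun _ => 1)) rv; first by exists 0%N => //; exact: zero_neq1.
move=> [|i] // _; rewrite /R /fdca_rule /nb /nx /= h5; ring.
Qed.


Ltac simp := rewrite /R /fdca_rule /nb /nx /=.

Lemma neq_shift (p : 'Z_d) : 1 - p != - p.
Proof.
apply/negP => /eqP e; have : (1 : 'Z_d) = 0 by rewrite -(subrr (-p)) -{1}e; ring.
by apply/eqP; exact: one_neq0.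
Qed.

Lemma c3_0 : fdca_reversible 2 c0 c1 c2 c3 c4 c5 c6 c7 -> c3 = 0.
Proof.
move=> rv; apply/eqP; apply/negPn/negP => nz; have u3 := unitF nz.
have [p Ep] : exists p, c6 = p * c3 by exists (c6 / c3); rewrite divrK.
have [q Eq] : exists q, c5 = q * c3 by exists (c5 / c3); rewrite divrK.
case: (eqVneq (c5 - c1 * p) 0) => h1.
  have E5 : c5 = c1 * p by apply/eqP; rewrite -subr_eq0 h1.
  apply: (@notrev 2 (nth 0 [:: -p; 0]) (nth 0 [:: -p; 1])) rv.
    by exists 1%N => //; exact: zero_neq1.
  move=> [|[|i]] // _; simp.
    rewrite Ep; ring.
  rewrite E5; ring.
case: (eqVneq (c4 - c1 * q) 0) => h2.
  have E4 : c4 = c1 * q by apply/eqP; rewrite -subr_eq0 h2.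
  apply: (@notrev 2 (nth 0 [:: 0; -q]) (nth 0 [:: 1; -q])) rv.
    by exists 0%N => //; exact: zero_neq1.
  move=> [|[|i]] // _; simp.
    rewrite Eq; ring.
  rewrite E4; ring.
have u1 := unitF h1.
pose rhs := (c4 - c1 * q) * (1 - p) - c5 * q + c4 * p.
pose b := rhs / (c5 - c1 * p).
have Hb : (c5 - c1 * p) * b = rhs by rewrite /b mulrC divrK.
apply: (@notrev 2 (nth 0 [:: 1 - p; -q]) (nth 0 [:: -p; b])) rv.
  by exists 0%N => //; exact: neq_shift.
move=> [|[|i]] // _; simp.
  rewrite Ep Eq; ring.
symmetry; transitivity ((c5 - c1 * p) * b - c4 * p + c7); first ring.
rewrite Hb /rhs; ring.
Qed.

Lemma c1_0 : fdca_reversible 2 c0 c1 c2 c3 c4 c5 c6 c7 -> c1 = 0.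
Proof.
move=> rv; apply/eqP; apply/negPn/negP => nz; have u1 := unitF nz.
have [p Ep] : exists p, c4 = p * c1 by exists (c4 / c1); rewrite divrK.
have [q Eq] : exists q, c5 = q * c1 by exists (c5 / c1); rewrite divrK.
case: (eqVneq (c5 - c3 * p) 0) => h1.
  have E5 : c5 = c3 * p by apply/eqP; rewrite -subr_eq0 h1.
  apply: (@notrev 2 (nth 0 [:: 0; -p]) (nth 0 [:: 1; -p])) rv.
    by exists 0%N => //; exact: zero_neq1.
  move=> [|[|i]] // _; simp.
    rewrite E5; ring.
  rewrite Ep; ring.
case: (eqVneq (c6 - c3 * q) 0) => h2.
  have E6 : c6 = c3 * q by apply/eqP; rewrite -subr_eq0 h2.
  apply: (@notrev 2 (nth 0 [:: -q; 0]) (nth 0 [:: -q; 1])) rv.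
    by exists 1%N => //; exact: zero_neq1.
  move=> [|[|i]] // _; simp.
    rewrite E6; ring.
  rewrite Eq; ring.
have u3 := unitF h1.
pose rhs := (c6 - c3 * q) * (1 - p) - c5 * q + c6 * p.
pose a := rhs / (c5 - c3 * p).
have Ha : (c5 - c3 * p) * a = rhs by rewrite /a mulrC divrK.
apply: (@notrev 2 (nth 0 [:: -q; 1 - p]) (nth 0 [:: a; -p])) rv.
  by exists 1%N => //; exact: neq_shift.
move=> [|[|i]] // _; simp.
  symmetry; transitivity ((c5 - c3 * p) * a - c6 * p + c7); first ring.
  rewrite Ha /rhs; ring.
rewrite Ep Eq; ring.
Qed.



Lemma nonlin6 (h1 : c1 = 0) (h3 : c3 = 0) (b : 'Z_d) :
  c6 != 0 -> c0 * (b + c5) + c2 \is a GRing.unit ->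
  ~ fdca_reversible 3 c0 c1 c2 c3 c4 c5 c6 c7.
Proof.
move=> n6 ue rv.
have u : c6 * (c0 * (b + c5) + c2) \is a GRing.unit by rewrite unitrM unitF // ue.
pose K := c5 * c5 - c4 * c6 - c4 * c6.
pose t := K / (c6 * (c0 * (b + c5) + c2)).
have Ht : (c6 * (c0 * (b + c5) + c2)) * t = K by rewrite /t mulrC divrK.
clearbody t.
apply: (@notrev 3 (nth 0 [:: 0; b; c4 + t]) (nth 0 [:: -c6; b + c5; t])) rv.
  by exists 0%N => //=; rewrite eq_sym oppr_eq0.
move=> [|[|[|i]]] // _; simp; rewrite ?h1 ?h3.
- ring.
- apply/eqP; rewrite -subr_eq0; apply/eqP.
  transitivity ((c6 * (c0 * (b + c5) + c2)) * t - K); first by rewrite /K; ring.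
  by rewrite Ht subrr.
- ring.
Qed.

Lemma nonlin4 (h1 : c1 = 0) (h3 : c3 = 0) (b : 'Z_d) :
  c4 != 0 -> c0 * (b + c5) + c2 \is a GRing.unit ->
  ~ fdca_reversible 3 c0 c1 c2 c3 c4 c5 c6 c7.
Proof.
move=> n4 ue rv.
have u : c4 * (c0 * (b + c5) + c2) \is a GRing.unit by rewrite unitrM unitF // ue.
pose K := c5 * c5 - c4 * c6 - c4 * c6.
pose t := K / (c4 * (c0 * (b + c5) + c2)).
have Ht : (c4 * (c0 * (b + c5) + c2)) * t = K by rewrite /t mulrC divrK.
clearbody t.
apply: (@notrev 3 (nth 0 [:: c6 + t; b; 0]) (nth 0 [:: t; b + c5; -c4])) rv.
  by exists 2%N => //=; rewrite eq_sym oppr_eq0.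
move=> [|[|[|i]]] // _; simp; rewrite ?h1 ?h3.
- ring.
- apply/eqP; rewrite -subr_eq0; apply/eqP.
  transitivity ((c4 * (c0 * (b + c5) + c2)) * t - K); first by rewrite /K; ring.
  by rewrite Ht subrr.
- ring.
Qed.

Lemma nonlin0 (h1 : c1 = 0) (h3 : c3 = 0) (h4 : c4 = 0) (h6 : c6 = 0) :
  c0 != 0 -> ~ fdca_reversible 3 c0 c1 c2 c3 c4 c5 c6 c7.
Proof.
move=> n0 rv.
have [w Ew] : exists w, c5 = - (c0 * w).
  by exists (- (c5 / c0)); rewrite mulrN opprK mulrC divrK // unitF.
apply: (@notrev 3 (nth 0 [:: 1; 0; w]) (nth 0 [:: 1; 1; w])) rv.
  by exists 1%N => //=; exact: zero_neq1.
move=> [|[|[|i]]] // _; simp; rewrite ?h1 ?h3 ?h4 ?h6.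
- ring.
- rewrite Ew; ring.
- ring.
Qed.

Lemma nonlin2 (h0 : c0 = 0) (h1 : c1 = 0) (h3 : c3 = 0) (h4 : c4 = 0) (h6 : c6 = 0) :
  c2 != 0 -> ~ fdca_reversible 4 c0 c1 c2 c3 c4 c5 c6 c7.
Proof.
move=> n2 rv.
have [r Er] : exists r, c5 = r * c2 by exists (c5 / c2); rewrite divrK // unitF.
apply: (@notrev 4 (nth 0 [:: 1; 0; 0; r * r]) (nth 0 [:: 1; c2; -c5; r * r])) rv.
  by exists 1%N => //=; rewrite eq_sym.
move=> [|[|[|[|i]]]] // _; simp; rewrite ?h0 ?h1 ?h3 ?h4 ?h6 ?Er; ring.
Qed.


Lemma linear_bad (h0 : c0 = 0) (h1 : c1 = 0) (h2 : c2 = 0) (h3 : c3 = 0) :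
  c4 != 0 -> c6 != 0 ->
  exists2 n, (0 < n)%N & ~ fdca_reversible n c0 c1 c2 c3 c4 c5 c6 c7.
Proof.
move=> n4 n6.
pose T := fun (p : 'Z_d * 'Z_d) => (p.2, - (c4 * p.1 + c5 * p.2) / c6).
have Tinj : injective T.
  move=> [x1 x2] [y1 y2] E; have e2 := congr1 fst E; have e := congr1 snd E.
  rewrite /T /= in e2 e; subst y2.
  have := congr1 (fun z => - (z * c6)) e; rewrite /= !divrK ?unitF // !opprK.
  by move=> /addIr /(mulrI (unitF n4)) ->.
pose p0 := ((0 : 'Z_d), (1 : 'Z_d)).
have Hm := iter_order Tinj p0.
have [n En n0] : exists2 n, order T p0 = n.+1 & (0 < n)%N.
  case E: (order T p0) => [|[|k]].
  - by have := order_gt0 T p0; rewrite E.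
  - move: Hm; rewrite E => /(congr1 fst); rewrite /= /T /= => e.
    by have := one_neq0; rewrite e eqxx.
  - by exists k.+1.
exists n => //.
pose q k := iter k T p0.
have Hs k : (q k.+1).1 = (q k).2 by [].
have Hr k : c6 * (q k.+1).2 = - (c4 * (q k).1 + c5 * (q k).2).
  by rewrite /q /= /T /= mulrC divrK // unitF.
have Hn : (q n).2 = 0.
  by move: Hm; rewrite En => /(congr1 fst).
apply: (@notrev n (fun k => (q k).2) (fun _ => 0)).
  by exists 0%N => //; exact: one_neq0.
move=> i hi.
have -> : nb (fun k => (q k).2) i = (q i).1 by case: i hi.
have -> : nb (fun _ => 0) i = 0 by case: i hi.
have -> : nx n (fun k => (q k).2) i = (q i.+1).2.
  rewrite /nx; case: ltnP => // hn.
  by have -> : i.+1 = n by apply/eqP; rewrite eqn_leq hn hi.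
have -> : nx n (fun _ => 0) i = 0 by rewrite /nx; case: ltnP.
move: (Hr i); generalize (q i).1 (q i).2 (q i.+1).2 => a b b' Hr'.
rewrite /R /fdca_rule h0 h1 h2 h3.
transitivity (c4 * a + c5 * b + c6 * b' + c7); first by ring.
rewrite Hr'; ring.
Qed.

Lemma cell_in n (x : config d n) (o : 'I_n) : cell x o = x o.
Proof.
rewrite /cell; case: insubP => [j _ hj | ]; last by rewrite ltn_ord.
by congr (x _); apply: val_inj.
Qed.

Lemma cell_out n (x : config d n) k : (n <= k)%N -> cell x k = 0.
Proof.
move=> hk; rewrite /cell; case: insubP => [j jl hj | ] //.
by move: (ltn_ord j); rewrite hj ltnNge hk.
Qed.

Lemma good4 (h0 : c0 = 0) (h1 : c1 = 0) (h2 : c2 = 0) (h3 : c3 = 0) (h4 : c4 = 0) :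
  c5 != 0 -> forall n, fdca_reversible n c0 c1 c2 c3 c4 c5 c6 c7.
Proof.
move=> n5 n; apply: injF_bij => x y E.
have rl a b c : fdca_rule c0 c1 c2 c3 c4 c5 c6 c7 a b c = c5 * b + c6 * c + c7.
  rewrite /fdca_rule h0 h1 h2 h3 h4; ring.
have Hc : forall m k, (n - m <= k)%N -> cell x k = cell y k.
  elim=> [|m IH] k hk.
    by rewrite !cell_out // -(subn0 n).
  case: (leqP (n - m) k) => hk'; first exact: IH.
  have kn : (k < n)%N by lia.
  have E0 := congr1 (fun z : config d n => z (Ordinal kn)) E; rewrite /= !ffunE /= !rl in E0.
  rewrite (IH k.+1) in E0; last by lia.
  move/addIr/addIr/(mulrI (unitF n5)): E0 => e.
  by rewrite -[k]/(nat_of_ord (Ordinal kn)) !cell_in.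
apply/ffunP => o; rewrite -!cell_in; by apply: (Hc n); rewrite subnn.
Qed.

Lemma good6 (h0 : c0 = 0) (h1 : c1 = 0) (h2 : c2 = 0) (h3 : c3 = 0) (h6 : c6 = 0) :
  c5 != 0 -> forall n, fdca_reversible n c0 c1 c2 c3 c4 c5 c6 c7.
Proof.
move=> n5 n; apply: injF_bij => x y E.
have rl a b c : fdca_rule c0 c1 c2 c3 c4 c5 c6 c7 a b c = c4 * a + c5 * b + c7.
  rewrite /fdca_rule h0 h1 h2 h3 h6; ring.
have Hc : forall k j, (j < k)%N -> cell x j = cell y j.
  elim=> [|k IH] j //; rewrite ltnS leq_eqVlt => /orP [/eqP -> | ]; last exact: IH.
  case: (leqP n k) => kn; first by rewrite !cell_out.
  have E0 := congr1 (fun z : config d n => z (Ordinal kn)) E; rewrite /= !ffunE /= !rl in E0.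
  have : (if k is k'.+1 then cell x k' else 0) = (if k is k'.+1 then cell y k' else 0).
    by case: k IH {E0 kn} => [|k'] // IH; apply: IH.
  move=> hh; move: E0; rewrite hh => /addIr; rewrite ![_ + c5 * _]addrC => /addIr.
  move/(mulrI (unitF n5)) => e.
  by rewrite -[k]/(nat_of_ord (Ordinal kn)) !cell_in.
apply/ffunP => o; rewrite -!cell_in; apply: (Hc o.+1); exact: ltnSn.
Qed.

End Core.

Theorem corollary1 (d : nat) (hd : prime d) (c0 c1 c2 c3 c4 c5 c6 c7 : 'Z_d) :
  (forall n : nat, (0 < n)%N -> fdca_reversible n c0 c1 c2 c3 c4 c5 c6 c7) <->
  c0 = 0 /\ c1 = 0 /\ c2 = 0 /\ c3 = 0 /\ (c4 = 0 \/ c6 = 0) /\ c5 != 0.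
Proof.
split; last first.
  move=> [h0 [h1 [h2 [h3 [[h4|h6] n5]]]]] n _.
    by apply: (good4 hd).
  by apply: (good6 hd).
move=> H.
have n5 := c5_nz (H 1%N isT).
have h3 := c3_0 hd (H 2%N isT).
have h1 := c1_0 hd (H 2%N isT).
have [h0 h2] : c0 = 0 /\ c2 = 0.
  have key : c0 != 0 \/ c2 != 0 -> False.
    move=> hor.
    have [b ub] : exists b, c0 * (b + c5) + c2 \is a GRing.unit.
      case: (eqVneq c2 0) => z2.
        case: hor => [z0|]; last by rewrite z2 eqxx.
        by exists 0; rewrite add0r z2 addr0 unitrM !unitF.
      by exists (- c5); rewrite addNr mulr0 add0r unitF.
    case: (eqVneq c6 0) => z6; last exact: (nonlin6 hd h1 h3 z6 ub (H 3%N isT)).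
    case: (eqVneq c4 0) => z4; last exact: (nonlin4 hd h1 h3 z4 ub (H 3%N isT)).
    case: (eqVneq c0 0) => z0; last exact: (nonlin0 hd h1 h3 z4 z6 z0 (H 3%N isT)).
    case: hor => [|z2]; first by rewrite z0 eqxx.
    exact: (nonlin2 hd z0 h1 h3 z4 z6 z2 (H 4%N isT)).
  case: (eqVneq c0 0) => z0; last by case: key; left.
  case: (eqVneq c2 0) => z2; last by case: key; right.
  by [].
do 4 (split; first by []); split => //.
case: (eqVneq c4 0) => z4; first by left.
case: (eqVneq c6 0) => z6; first by right.
have [n n0 nr] : exists2 n, (0 < n)%N & ~ fdca_reversible n c0 c1 c2 c3 c4 c5 c6 c7.
  by apply: (linear_bad hd).
by case: nr; apply: H.
Qed.
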